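(* For every $n\ge 1$, the expected value of $\Phi_n$ under the Yule model is $$E_Y(\Phi_n)=n(n-1)-2n\sum_{i=2}^n\frac1i.$$
   Context: A binary phylogenetic tree with $n$ leaves is a rooted tree whose leaves are bijectively labeled by $\{1,\dots,n\}$ and whose internal nodes each have exactly two children; $\mathcal{BT}_n$ is the set of such trees up to isomorphism. $\kappa_T(v)$ is the number of leaves below $v$ and $V_{int}(T)$ the set of internal nodes. The depth $\delta_T(v)$ is the number of arcs from the root to $v$; $\varphi_T(i,j)=\delta_T(LCA_T(i,j))$ ($LCA$ = lowest common ancestor), and $\Phi(T)=\sum_{1\le i<j\le n}\varphi_T(i,j)$. $\Phi_n$ is the random variable $\Phi(T)$ for $T$ random in $\mathcal{BT}_n$. Under the Yule model $T\in\mathcal{BT}_n$ has probability $P_Y(T)=\frac{2^{n-1}}{n!}\prod_{v\in V_{int}(T)}\frac{1}{\kappa_T(v)-1}$, and $E_Y$ denotes expectation under it. *)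

(* Defs.v *)
From Stdlib Require Import Reals List Permutation Arith Bool.
Import ListNotations.
Open Scope R_scope.

(* A binary
   phylogenetic tree (an element of BT_n, i.e. up to isomorphism) is
   represented by any planar tree in its class; isomorphism = swapping
   children at internal nodes. *)
Inductive tree : Type :=
| Leaf : nat -> tree
| Node : tree -> tree -> tree.

Fixpoint leaves (T : tree) : list nat :=
  match T with
  | Leaf i => [i]
  | Node l r => leaves l ++ leaves r
  end.

Definition kappa (T : tree) : nat := length (leaves T).

Definition valid (n : nat) (T : tree) : Prop :=
  Permutation (leaves T) (seq 1 n).

Inductive iso : tree -> tree -> Prop :=
| iso_leaf : forall i, iso (Leaf i) (Leaf i)
| iso_node : forall a b c d, iso a c -> iso b d -> iso (Node a b) (Node c d)
| iso_swap : forall a b c d, iso a d -> iso b c -> iso (Node a b) (Node c d).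

Definition BT_reps (n : nat) (L : list tree) : Prop :=
  (forall T, In T L -> valid n T) /\
  (forall T, valid n T -> exists T', In T' L /\ iso T T') /\
  ForallOrdPairs (fun a b => ~ iso a b) L.

Fixpoint yule_prod (T : tree) : R :=
  match T with
  | Leaf _ => 1
  | Node l r => / (INR (kappa (Node l r)) - 1) * yule_prod l * yule_prod r
  end.

Definition P_Y (n : nat) (T : tree) : R :=
  2 ^ (n - 1) / INR (fact n) * yule_prod T.

Definition mem (i : nat) (T : tree) : bool := existsb (Nat.eqb i) (leaves T).

Fixpoint phi (T : tree) (i j : nat) : nat :=
  match T with
  | Leaf _ => 0
  | Node l r =>
      if andb (mem i l) (mem j l) then S (phi l i j)
      else if andb (mem i r) (mem j r) then S (phi r i j)
      else 0
  end.

Definition sumR (l : list R) : R := fold_right Rplus 0 l.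

Definition Phi (n : nat) (T : tree) : R :=
  sumR (map (fun i => sumR (map (fun j => INR (phi T i j)) (seq (S i) (n - i))))
            (seq 1 n)).

Definition E_Y_Phi (n : nat) (L : list tree) : R :=
  sumR (map (fun T => P_Y n T * Phi n T) L).

Definition harm2 (n : nat) : R := sumR (map (fun i => / INR i) (seq 2 (n - 1))).

(* Main.v *)
Require Import Defs.
From Stdlib Require Import Reals List Permutation Arith.
From Stdlib Require Import Lia Lra.
Import ListNotations.
Open Scope R_scope.

Lemma leaves_nonempty T : (1 <= length (leaves T))%nat.
Proof. induction T; simpl; auto. rewrite length_app; lia. Qed.

Lemma iso_refl T : iso T T.
Proof. induction T; constructor; auto. Qed.

Lemma iso_sym a b : iso a b -> iso b a.
Proof. induction 1; [constructor | apply iso_node | apply iso_swap]; auto. Qed.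

Lemma iso_trans a b : iso a b -> forall c, iso b c -> iso a c.
Proof.
  induction 1; intros e He; auto.
  - inversion He; subst; [apply iso_node | apply iso_swap]; auto.
  - inversion He; subst; [apply iso_swap | apply iso_node]; auto.
Qed.

Lemma iso_perm a b : iso a b -> Permutation (leaves a) (leaves b).
Proof.
  induction 1; simpl; auto.
  - apply Permutation_app; auto.
  - eapply perm_trans. apply Permutation_app; eauto. apply Permutation_app_comm.
Qed.

Lemma iso_kappa a b : iso a b -> kappa a = kappa b.
Proof. intro H. apply Permutation_length, iso_perm, H. Qed.

Lemma iso_yp a b : iso a b -> yule_prod a = yule_prod b.
Proof.
  intro H. pose proof (iso_kappa _ _ H) as Hk. revert Hk.
  induction H; intro Hk; simpl in *; auto.
  - unfold kappa in *. rewrite Hk, IHiso1, IHiso2 by (apply iso_kappa; auto). ring.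
  - unfold kappa in *. rewrite Hk, IHiso1, IHiso2 by (apply iso_kappa; auto). ring.
Qed.

Definition C2 (k : nat) : R := INR k * (INR k - 1) / 2.

Fixpoint psi (T : tree) : R :=
  match T with
  | Leaf _ => 0
  | Node l r => psi l + psi r + C2 (kappa l) + C2 (kappa r)
  end.

Lemma iso_psi a b : iso a b -> psi a = psi b.
Proof.
  induction 1; simpl; auto.
  - rewrite IHiso1, IHiso2, (iso_kappa a c), (iso_kappa b d); auto.
  - rewrite IHiso1, IHiso2, (iso_kappa a d), (iso_kappa b c); auto. ring.
Qed.

Lemma fop_app {A} (R0 : A -> A -> Prop) l1 l2 :
  ForallOrdPairs R0 l1 -> ForallOrdPairs R0 l2 ->
  (forall x y, In x l1 -> In y l2 -> R0 x y) -> ForallOrdPairs R0 (l1 ++ l2).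
Proof.
  induction 1; intros H2 H3; simpl; auto.
  constructor.
  - apply Forall_app; split; auto. apply Forall_forall; intros; apply H3; simpl; auto.
  - apply IHForallOrdPairs; auto. intros; apply H3; simpl; auto.
Qed.

Lemma fop_impl {A} (R1 R2 : A -> A -> Prop) l :
  (forall x y, In x l -> In y l -> R1 x y -> R2 x y) ->
  ForallOrdPairs R1 l -> ForallOrdPairs R2 l.
Proof.
  intros H F; induction F; constructor.
  - rewrite Forall_forall in *. intros; apply H; simpl; auto.
  - apply IHF; intros; apply H; simpl; auto.
Qed.

Lemma fop_flat_map {A B} (R0 : B -> B -> Prop) (g : A -> list B) l :
  (forall x, In x l -> ForallOrdPairs R0 (g x)) ->
  ForallOrdPairs (fun x y => forall u v, In u (g x) -> In v (g y) -> R0 u v) l ->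
  ForallOrdPairs R0 (flat_map g l).
Proof.
  intros H F; induction F; simpl; [constructor|].
  apply fop_app.
  - apply H; simpl; auto.
  - apply IHF; intros; apply H; simpl; auto.
  - intros u v Hu Hv. apply in_flat_map in Hv as [y [Hy Hv]].
    rewrite Forall_forall in H0. eapply H0; eauto.
Qed.

Lemma fop_map {A B} (R0 : B -> B -> Prop) (h : A -> B) l :
  ForallOrdPairs (fun x y => R0 (h x) (h y)) l -> ForallOrdPairs R0 (map h l).
Proof.
  induction 1; simpl; constructor; auto.
  rewrite Forall_forall in *. intros x Hx. apply in_map_iff in Hx as [y [<- Hy]]; auto.
Qed.

Lemma fop_mid {A} (R0 : A -> A -> Prop) C1 c C2' :
  ForallOrdPairs R0 (C1 ++ c :: C2') ->
  ForallOrdPairs R0 (C1 ++ C2') /\ (forall t, In t (C1 ++ C2') -> R0 t c \/ R0 c t).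
Proof.
  induction C1; simpl; intro H; inversion H; subst.
  - split; auto. intros t Ht. right. rewrite Forall_forall in H2; auto.
  - destruct (IHC1 H3) as [H4 H5]. rewrite Forall_forall in H2. split.
    + constructor; auto. apply Forall_forall; intros; apply H2.
      apply in_app_or in H0 as [|]; apply in_or_app; simpl; auto.
    + intros t [<-|Ht]; auto. left. apply H2. apply in_or_app; simpl; auto.
Qed.

Lemma sumR_perm l l' : Permutation l l' -> sumR l = sumR l'.
Proof. induction 1; simpl; try lra. Qed.

Definition niso a b := ~ iso a b.

Lemma sum_invariant (P : tree -> Prop) (h : tree -> R) :
  (forall a b, P a -> iso a b -> h a = h b) ->
  forall L C, (forall T, In T L -> P T) ->
  (forall T, In T L -> exists T', In T' C /\ iso T T') ->
  (forall T, In T C -> exists T', In T' L /\ iso T T') ->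
  ForallOrdPairs niso L -> ForallOrdPairs niso C ->
  sumR (map h L) = sumR (map h C).
Proof.
  intros Hh L. induction L as [|a L IH]; intros C HP H1 H2 F1 F2.
  - destruct C as [|c C]; auto. destruct (H2 c) as [? [[] _]]; simpl; auto.
  - destruct (H1 a) as [c [Hc Hac]]; simpl; auto.
    apply in_split in Hc as [C1 [C2' ->]].
    inversion F1; subst.
    destruct (fop_mid _ _ _ _ F2) as [F3 F4].
    rewrite map_app. simpl. 
    rewrite (sumR_perm (map h C1 ++ h c :: map h C2') (h c :: map h C1 ++ map h C2'))
      by (symmetry; apply Permutation_middle).
    simpl. rewrite <- map_app. rewrite (Hh a c); [| apply HP; simpl; auto | auto].
    f_equal. apply IH; auto.
    + intros; apply HP; simpl; auto.
    + intros T HT. destruct (H1 T) as [T' [HT' Hi]]; simpl; auto.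
      apply in_app_or in HT' as [HT'|[<-|HT']].
      * exists T'; split; auto; apply in_or_app; auto.
      * exfalso. rewrite Forall_forall in H3. apply (H3 T HT).
        apply (iso_trans _ _ Hac). apply iso_sym; auto.
      * exists T'; split; auto; apply in_or_app; simpl; auto.
    + intros T HT. destruct (H2 T) as [T' [[<-|HT'] Hi]].
      * apply in_app_or in HT as [|]; apply in_or_app; simpl; auto.
      * exfalso. destruct (F4 T HT) as [Hn|Hn]; apply Hn.
        -- apply (iso_trans _ _ Hi); auto.
        -- apply iso_sym. apply (iso_trans _ _ Hi); auto.
      * exists T'; auto.
Qed.


Lemma sumR_plus {A} (f g : A -> R) l :
  sumR (map (fun x => f x + g x) l) = sumR (map f l) + sumR (map g l).
Proof. induction l; simpl; [lra|]. rewrite IHl; ring. Qed.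

Lemma sumR_scal {A} (c : R) (f : A -> R) l :
  sumR (map (fun x => c * f x) l) = c * sumR (map f l).
Proof. induction l; simpl; [ring|]. rewrite IHl; ring. Qed.

Lemma sumR_ext {A} (f g : A -> R) l :
  (forall x, In x l -> f x = g x) -> sumR (map f l) = sumR (map g l).
Proof. induction l; simpl; intros H; auto. rewrite H, IHl; auto. Qed.

Lemma sumR_zero {A} (l : list A) : sumR (map (fun _ => 0) l) = 0.
Proof. induction l; simpl; auto. rewrite IHl; ring. Qed.

Lemma mem_In i T : mem i T = true <-> In i (leaves T).
Proof.
  unfold mem. rewrite existsb_exists. split.
  - intros [x [Hx He]]. apply Nat.eqb_eq in He; subst; auto.
  - intros H; exists i; split; auto; apply Nat.eqb_refl.
Qed.

Lemma mem_false i T : mem i T = false <-> ~ In i (leaves T).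
Proof. rewrite <- mem_In. destruct (mem i T); split; congruence. Qed.

Lemma phi_out T i j : mem i T = false \/ mem j T = false -> phi T i j = 0%nat.
Proof.
  induction T; simpl; auto. intro H.
  unfold mem in H; simpl in H. rewrite !existsb_app in H.
  unfold mem. destruct H as [H|H]; apply Bool.orb_false_iff in H as [H1 H2];
  rewrite H1, H2; simpl; rewrite ?Bool.andb_false_r; auto.
Qed.

Lemma nodup_disj {A} (l1 l2 : list A) x : NoDup (l1 ++ l2) -> In x l1 -> In x l2 -> False.
Proof.
  induction l1; simpl; intros ND H1 H2; [auto|]. inversion ND; subst.
  destruct H1 as [<-|H1]; [apply H3; apply in_or_app; auto | eauto].
Qed.

Definition e (T : tree) (i : nat) : R := if mem i T then 1 else 0.

Lemma phi_node l r i j : NoDup (leaves (Node l r)) ->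
  INR (phi (Node l r) i j) =
  e l i * e l j + e r i * e r j + INR (phi l i j) + INR (phi r i j).
Proof.
  intro ND. simpl in ND.
  assert (Hd : forall x, mem x l = true -> mem x r = false).
  { intros x Hx. apply mem_In in Hx. apply mem_false. intro Hr.
    eapply nodup_disj; eauto. }
  cbn -[INR]. unfold e.
  destruct (mem i l) eqn:Hil, (mem j l) eqn:Hjl; cbn -[INR].
  - rewrite (Hd i Hil). rewrite (phi_out r i j) by auto. rewrite S_INR. simpl INR at 3; ring.
  - rewrite (phi_out l i j) by auto.
    destruct (mem i r) eqn:E1, (mem j r) eqn:E2; cbn -[INR]; rewrite ?S_INR; try (rewrite (phi_out r i j) by auto); simpl INR; ring.
  - rewrite (phi_out l i j) by auto.
    destruct (mem i r) eqn:E1, (mem j r) eqn:E2; cbn -[INR]; rewrite ?S_INR; try (rewrite (phi_out r i j) by auto); simpl INR; ring.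
  - rewrite (phi_out l i j) by auto.
    destruct (mem i r) eqn:E1, (mem j r) eqn:E2; cbn -[INR]; rewrite ?S_INR; try (rewrite (phi_out r i j) by auto); simpl INR; ring.
Qed.

Definition pairsum (n : nat) (g : nat -> nat -> R) : R :=
  sumR (map (fun i => sumR (map (fun j => g i j) (seq (S i) (n - i)))) (seq 1 n)).

Lemma pairsum_plus n f g :
  pairsum n (fun i j => f i j + g i j) = pairsum n f + pairsum n g.
Proof.
  unfold pairsum. rewrite <- sumR_plus. apply sumR_ext. intros. apply sumR_plus.
Qed.

Lemma pairsum_count (ef : nat -> R) n :
  (forall i, ef i * ef i = ef i) ->
  forall m a, (a + m = S n)%nat ->
  2 * sumR (map (fun i => sumR (map (fun j => ef i * ef j) (seq (S i) (n - i)))) (seq a m))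
  = sumR (map ef (seq a m)) * sumR (map ef (seq a m)) - sumR (map ef (seq a m)).
Proof.
  intros He m. induction m; intros a Ha; simpl; [ring|].
  replace (n - a)%nat with m by lia.
  rewrite sumR_scal. specialize (IHm (S a) ltac:(lia)).
  set (c := sumR (map ef (seq (S a) m))) in *.
  set (P := sumR _) in IHm |- *.
  assert (H := He a). nra.
Qed.

Lemma sum_indicator (p : nat -> bool) l :
  sumR (map (fun i => if p i then 1 else 0) l) = INR (length (filter p l)).
Proof.
  induction l; [reflexivity|]. simpl. rewrite IHl. destruct (p a); [change (length (a :: filter p l)) with (S (length (filter p l))); rewrite S_INR|]; ring.
Qed.

Lemma count_leaves T n : NoDup (leaves T) -> incl (leaves T) (seq 1 n) ->
  sumR (map (e T) (seq 1 n)) = INR (length (leaves T)).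
Proof.
  intros ND Hi. unfold e. rewrite sum_indicator. f_equal.
  apply Permutation_length. apply NoDup_Permutation.
  - apply NoDup_filter, seq_NoDup.
  - auto.
  - intro x. rewrite filter_In, mem_In. split; [tauto|]. intro; split; auto.
Qed.

Lemma pairsum_e T n : NoDup (leaves T) -> incl (leaves T) (seq 1 n) ->
  pairsum n (fun i j => e T i * e T j) = C2 (length (leaves T)).
Proof.
  intros ND Hi. unfold pairsum, C2.
  pose proof (pairsum_count (e T) n ltac:(intro i; unfold e; destruct (mem i T); ring) n 1 ltac:(lia)) as H.
  rewrite count_leaves in H by auto. lra.
Qed.

Lemma Phi_psi n T : NoDup (leaves T) -> incl (leaves T) (seq 1 n) -> Phi n T = psi T.
Proof.
  induction T as [k|l IHl r IHr]; intros ND Hi.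
  - unfold Phi. simpl psi. transitivity (sumR (map (fun _:nat => 0) (seq 1 n))).
    + apply sumR_ext; intros. simpl phi. exact (sumR_zero _).
    + apply sumR_zero.
  - simpl in ND.
    assert (NDl := NoDup_app_remove_r _ _ ND). assert (NDr := NoDup_app_remove_l _ _ ND).
    assert (Hil : incl (leaves l) (seq 1 n)) by (intros x Hx; apply Hi; simpl; apply in_or_app; auto).
    assert (Hir : incl (leaves r) (seq 1 n)) by (intros x Hx; apply Hi; simpl; apply in_or_app; auto).
    unfold Phi.
    rewrite (sumR_ext _ (fun i => sumR (map (fun j => (e l i * e l j + e r i * e r j) + (INR (phi l i j) + INR (phi r i j))) (seq (S i) (n - i)))))
      by (intros; apply sumR_ext; intros; rewrite phi_node by auto; ring).
    fold (pairsum n (fun i j => (e l i * e l j + e r i * e r j) + (INR (phi l i j) + INR (phi r i j)))).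
    rewrite !pairsum_plus. rewrite !pairsum_e by auto.
    unfold pairsum in *. unfold Phi in *. rewrite IHl, IHr by auto.
    simpl. unfold kappa. ring.
Qed.


Fixpoint splits (t : list nat) : list (list nat * list nat) :=
  match t with
  | [] => [([], [])]
  | x :: t' => map (fun p => (x :: fst p, snd p)) (splits t') ++
               map (fun p => (fst p, x :: snd p)) (splits t')
  end.

Fixpoint Dn (f : nat) (s : list nat) : list tree :=
  match f with
  | 0 => []
  | S f' =>
    match s with
    | [] => []
    | [m] => [Leaf m]
    | m :: t => flat_map (fun p => flat_map (fun a => map (Node a) (Dn f' (snd p)))
                                            (Dn f' (m :: fst p))) (splits t)
    end
  end.

Lemma splits_perm t p : In p (splits t) -> Permutation t (fst p ++ snd p).
Proof.
  revert p; induction t as [|x t IH]; simpl; intros p Hp.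
  - destruct Hp as [<-|[]]; simpl; auto.
  - apply in_app_or in Hp as [Hp|Hp]; apply in_map_iff in Hp as [q [<- Hq]]; simpl.
    + constructor; auto.
    + eapply perm_trans; [|apply Permutation_middle]. constructor; auto.
Qed.

Lemma splits_filter g t :
  In (filter g t, filter (fun x => negb (g x)) t) (splits t).
Proof.
  induction t as [|x t IH]; simpl; auto.
  apply in_or_app. destruct (g x); simpl; [left | right];
  apply in_map_iff; eexists; (split; [|exact IH]); reflexivity.
Qed.

Lemma splits_fop t : NoDup t ->
  ForallOrdPairs (fun p q => ~ Permutation (fst p) (fst q)) (splits t).
Proof.
  induction t as [|x t IH]; simpl; intro ND.
  - repeat constructor.
  - inversion ND; subst. specialize (IH H2). apply fop_app.
    + apply fop_map. simpl. eapply fop_impl; [|exact IH].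
      intros p q _ _ Hn Hp. apply Hn. eapply Permutation_cons_inv; eauto.
    + apply fop_map. simpl. auto.
    + intros u v Hu Hv. apply in_map_iff in Hu as [p [<- Hp]].
      apply in_map_iff in Hv as [q [<- Hq]]. simpl. intro HP.
      apply H1. apply (Permutation_in _ (Permutation_sym (splits_perm _ _ Hq))). apply in_or_app. left.
      eapply Permutation_in; [exact HP|]. left; auto.
Qed.

Lemma Dn_cons f m y t :
  Dn (S f) (m :: y :: t) =
  flat_map (fun p => flat_map (fun a => map (Node a) (Dn f (snd p)))
                              (Dn f (m :: fst p))) (splits (y :: t)).
Proof. reflexivity. Qed.

Lemma Dn_in f m y t T : In T (Dn (S f) (m :: y :: t)) ->
  exists p a b, In p (splits (y :: t)) /\ In a (Dn f (m :: fst p)) /\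
                In b (Dn f (snd p)) /\ T = Node a b.
Proof.
  rewrite Dn_cons. intro H. apply in_flat_map in H as [p [Hp H]].
  apply in_flat_map in H as [a [Ha H]]. apply in_map_iff in H as [b [<- Hb]].
  exists p, a, b; auto.
Qed.

Lemma D_valid f s T : In T (Dn f s) -> Permutation (leaves T) s.
Proof.
  revert s T; induction f as [|f IH]; intros s T H; [destruct H|].
  destruct s as [|m [|y t]]; [destruct H| destruct H as [<-|[]]; simpl; auto |].
  apply Dn_in in H as [p [a [b [Hp [Ha [Hb ->]]]]]].
  simpl. apply IH in Ha. apply IH in Hb. apply splits_perm in Hp.
  eapply perm_trans. apply Permutation_app; eauto. simpl. constructor. symmetry; auto.
Qed.

Lemma leaves_single T m : Permutation (leaves T) [m] -> T = Leaf m.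
Proof.
  intro H. destruct T as [k|l r].
  - simpl in H. apply Permutation_length_1 in H. subst; auto.
  - apply Permutation_length in H. simpl in H. rewrite length_app in H.
    pose proof (leaves_nonempty l); pose proof (leaves_nonempty r); lia.
Qed.

Lemma D_complete f : forall s T, (length s <= f)%nat -> NoDup s ->
  Permutation (leaves T) s -> exists T', In T' (Dn f s) /\ iso T T'.
Proof.
  induction f as [|f IH]; intros s T Hl ND HP.
  - destruct s; simpl in Hl; [|lia]. apply Permutation_length in HP.
    pose proof (leaves_nonempty T); simpl in HP; lia.
  - destruct s as [|m [|y t]].
    + apply Permutation_length in HP. pose proof (leaves_nonempty T); simpl in HP; lia.
    + apply leaves_single in HP. subst. exists (Leaf m); split; [left; auto| apply iso_refl].
    + destruct T as [k|l r].
      { apply Permutation_length in HP. simpl in HP. lia. }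
      set (t0 := y :: t) in *.
      assert (Hmain : forall a0 b0, Permutation (leaves a0 ++ leaves b0) (m :: t0) ->
                In m (leaves a0) ->
                exists a' b', In (Node a' b') (Dn (S f) (m :: t0)) /\ iso a0 a' /\ iso b0 b').
      { intros a0 b0 HP0 Hm.
        assert (ND0 : NoDup (leaves a0 ++ leaves b0)) by (eapply Permutation_NoDup; [symmetry; exact HP0| exact ND]).
        inversion ND; subst.
        set (g := fun x => mem x a0).
        set (A := filter g t0). set (B := filter (fun x => negb (g x)) t0).
        assert (Hin : forall x, In x (leaves a0) \/ In x (leaves b0) <-> x = m \/ In x t0).
        { intro x. split; intro Hx.
          - assert (In x (m :: t0)) by (eapply Permutation_in; [exact HP0|]; apply in_or_app; tauto).
            destruct H; auto.
          - assert (In x (leaves a0 ++ leaves b0)) by (eapply Permutation_in; [symmetry; exact HP0|]; destruct Hx as [->|]; simpl; auto).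
            apply in_app_or; auto. }
        assert (PA : Permutation (leaves a0) (m :: A)).
        { apply NoDup_Permutation.
          - eapply NoDup_app_remove_r; eauto.
          - constructor. intro HA. apply filter_In in HA. tauto. apply NoDup_filter; auto.
          - intro x. unfold A, g. split.
            + intro Hx. destruct (proj1 (Hin x) (or_introl Hx)); [left; auto|right].
              apply filter_In. rewrite mem_In. auto.
            + intros [<-|Hx]; auto. apply filter_In in Hx. apply mem_In. tauto. }
        assert (PB : Permutation (leaves b0) B).
        { apply NoDup_Permutation.
          - eapply NoDup_app_remove_l; eauto.
          - apply NoDup_filter; auto.
          - intro x. unfold B, g. rewrite filter_In, Bool.negb_true_iff, mem_false. split.
            + intro Hx. assert (~ In x (leaves a0)) by (intro; eapply nodup_disj; eauto).
              destruct (proj1 (Hin x) (or_intror Hx)) as [->|]; [contradiction|auto].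
            + intros [Hx Hn]. destruct (proj2 (Hin x) (or_intror Hx)); tauto. }
        assert (Hlen : (length (leaves a0) + length (leaves b0) = S (length t0))%nat).
        { rewrite <- length_app. apply Permutation_length in HP0. auto. }
        pose proof (leaves_nonempty a0); pose proof (leaves_nonempty b0).
        simpl in Hl.
        destruct (IH (m :: A) a0) as [a' [Ha' Ia]]; auto.
        { rewrite <- (Permutation_length PA). unfold t0 in Hlen; simpl in Hlen. lia. }
        { eapply Permutation_NoDup; eauto. eapply NoDup_app_remove_r; eauto. }
        destruct (IH B b0) as [b' [Hb' Ib]]; auto.
        { rewrite <- (Permutation_length PB). unfold t0 in Hlen; simpl in Hlen. lia. }
        { apply NoDup_filter; auto. }
        exists a', b'. split; auto. unfold t0. rewrite Dn_cons. apply in_flat_map.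
        exists (A, B). split; [apply splits_filter|].
        apply in_flat_map. exists a'; split; auto. apply in_map; auto. }
      simpl in HP. destruct (in_app_or (leaves l) (leaves r) m) as [Hm|Hm].
      { eapply Permutation_in; [symmetry; exact HP| left; auto]. }
      * destruct (Hmain l r HP Hm) as [a' [b' [H1 [H2 H3]]]].
        exists (Node a' b'); split; auto. apply iso_node; auto.
      * destruct (Hmain r l) as [a' [b' [H1 [H2 H3]]]]; auto.
        { eapply perm_trans; [apply Permutation_app_comm| exact HP]. }
        exists (Node a' b'); split; auto. apply iso_swap; auto.
Qed.

Lemma D_fop f : forall s, NoDup s -> ForallOrdPairs niso (Dn f s).
Proof.
  induction f as [|f IH]; intros s ND; [constructor|].
  destruct s as [|m [|y t]]; [constructor| repeat constructor|].
  rewrite Dn_cons. set (t0 := y :: t) in *.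
  inversion ND; subst.
  assert (Hsw : forall p q a b', In p (splits t0) -> In q (splits t0) ->
            In a (Dn f (m :: fst p)) -> In b' (Dn f (snd q)) -> ~ iso a b').
  { intros p q a b' Hp Hq Ha Hb Hi. apply iso_perm in Hi.
    apply D_valid in Ha. apply D_valid in Hb. apply splits_perm in Hq.
    apply H1. apply (Permutation_in _ (Permutation_sym Hq)). apply in_or_app; right.
    eapply Permutation_in; [exact Hb|]. eapply Permutation_in; [exact Hi|].
    eapply Permutation_in; [symmetry; exact Ha|]. left; auto. }
  assert (NDp : forall p, In p (splits t0) -> NoDup (m :: fst p) /\ NoDup (snd p)).
  { intros p Hp. apply splits_perm in Hp.
    assert (NoDup (fst p ++ snd p)) by (eapply Permutation_NoDup; eauto).
    split; [constructor|].
    - intro HA. apply H1. eapply Permutation_in; [symmetry; exact Hp|]. apply in_or_app; auto.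
    - eapply NoDup_app_remove_r; eauto.
    - eapply NoDup_app_remove_l; eauto. }
  apply fop_flat_map.
  - intros p Hp. destruct (NDp p Hp) as [N1 N2]. apply fop_flat_map.
    + intros a Ha. apply fop_map. eapply fop_impl; [|exact (IH _ N2)].
      intros b b' Hb Hb' Hn Hi. inversion Hi; subst; [contradiction|].
      exfalso; eapply (Hsw p p a b'); eauto.
    + eapply fop_impl; [|exact (IH _ N1)].
      intros a a' Ha Ha' Hn u v Hu Hv.
      apply in_map_iff in Hu as [b [<- Hb]]. apply in_map_iff in Hv as [b' [<- Hb']].
      intro Hi. inversion Hi; subst; [contradiction|]. exfalso; eapply (Hsw p p a b'); eauto.
  - eapply fop_impl; [|exact (splits_fop t0 H2)].
    intros p q Hp Hq Hn u v Hu Hv.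
    apply in_flat_map in Hu as [a [Ha Hu]]. apply in_map_iff in Hu as [b [<- Hb]].
    apply in_flat_map in Hv as [a' [Ha' Hv]]. apply in_map_iff in Hv as [b' [<- Hb']].
    intro Hi. inversion Hi; subst.
    + apply Hn. apply iso_perm in H4. apply D_valid in Ha. apply D_valid in Ha'.
      apply (Permutation_cons_inv (a := m)).
      eapply perm_trans; [symmetry; exact Ha|]. eapply perm_trans; [exact H4| exact Ha'].
    + eapply Hsw; [exact Hp | exact Hq | exact Ha | exact Hb' | exact H4].
Qed.


Fixpoint sumN (f : nat -> R) (N : nat) : R :=
  match N with 0 => 0 | S N' => sumN f N' + f N' end.

Lemma sumN_ext f g N : (forall k, (k < N)%nat -> f k = g k) -> sumN f N = sumN g N.
Proof. induction N; simpl; intros H; auto. rewrite IHN, H; auto. Qed.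

Lemma sumN_shift f N : sumN f (S N) = f 0%nat + sumN (fun k => f (S k)) N.
Proof. induction N; simpl in *; [ring|]. rewrite IHN; ring. Qed.

Lemma sumN_plus f g N : sumN (fun k => f k + g k) N = sumN f N + sumN g N.
Proof. induction N; simpl; [ring|]. rewrite IHN; ring. Qed.

Lemma sumN_scal c f N : sumN (fun k => c * f k) N = c * sumN f N.
Proof. induction N; simpl; [ring|]. rewrite IHN; ring. Qed.

Lemma sumN_rev f N : sumN f N = sumN (fun k => f (N - 1 - k)%nat) N.
Proof.
  induction N; auto.
  rewrite (sumN_shift (fun k => f (S N - 1 - k)%nat)).
  change (sumN f (S N)) with (sumN f N + f N). rewrite IHN.
  replace (S N - 1 - 0)%nat with N by lia. rewrite Rplus_comm. f_equal.
  apply sumN_ext. intros k Hk. f_equal. lia.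
Qed.

Lemma sumR_app l1 l2 : sumR (l1 ++ l2) = sumR l1 + sumR l2.
Proof. induction l1; simpl; [ring|]. rewrite IHl1; ring. Qed.

Lemma sumR_flat_map {A B} (h : B -> R) (g : A -> list B) l :
  sumR (map h (flat_map g l)) = sumR (map (fun x => sumR (map h (g x))) l).
Proof. induction l; simpl; auto. rewrite map_app, sumR_app, IHl; auto. Qed.

Lemma sumR_lin2 {A} a b (f g : A -> R) l :
  sumR (map (fun x => a * f x + b * g x) l) = a * sumR (map f l) + b * sumR (map g l).
Proof. induction l; simpl; [ring|]. rewrite IHl; ring. Qed.

Lemma splits_fact t : forall (psi0 : nat -> nat -> R),
  sumR (map (fun p => INR (fact (length (fst p))) * INR (fact (length (snd p))) *
                      psi0 (length (fst p)) (length (snd p))) (splits t)) =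
  INR (fact (length t)) * sumN (fun k => psi0 k (length t - k)%nat) (S (length t)).
Proof.
  induction t as [|x t IH]; intro psi0.
  - simpl. ring.
  - simpl splits. rewrite map_app, sumR_app, !map_map. simpl fst; simpl snd.
    rewrite (sumR_ext _ (fun p => INR (fact (length (fst p))) * INR (fact (length (snd p))) *
       ((fun k l => INR (S k) * psi0 (S k) l) (length (fst p)) (length (snd p))))).
    2:{ intros p _. simpl length. change (fact (S (length (fst p)))) with (S (length (fst p)) * fact (length (fst p)))%nat.
        rewrite mult_INR. ring. }
    rewrite (sumR_ext (fun p => _ * _ * psi0 (length (fst p)) (length (x :: snd p)))
       (fun p => INR (fact (length (fst p))) * INR (fact (length (snd p))) *
       ((fun k l => INR (S l) * psi0 k (S l)) (length (fst p)) (length (snd p))))).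
    2:{ intros p _. simpl length. change (fact (S (length (snd p)))) with (S (length (snd p)) * fact (length (snd p)))%nat.
        rewrite mult_INR. ring. }
    pose proof (IH (fun k l => INR (S k) * psi0 (S k) l)) as E3; cbv beta in E3; rewrite E3; clear E3.
    pose proof (IH (fun k l => INR (S l) * psi0 k (S l))) as E3; cbv beta in E3; rewrite E3; clear E3.
    simpl length.
    set (N := length t).
    set (u := fun k => psi0 k (S N - k)%nat).
    rewrite (sumN_ext (fun k => INR (S k) * psi0 (S k) (N - k)%nat) (fun k => INR (S k) * u (S k))).
    2:{ intros k Hk. unfold u. reflexivity. }
    rewrite (sumN_ext (fun k => INR (S (N - k)) * psi0 k (S (N - k))) (fun k => (INR (S N) - INR k) * u k)).
    2:{ intros k Hk. unfold u. replace (S (N - k)) with (S N - k)%nat by lia.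
        rewrite minus_INR by lia. reflexivity. }
    assert (E1 : sumN (fun k => INR (S k) * u (S k)) (S N) = sumN (fun k => INR k * u k) (S (S N))).
    { rewrite (sumN_shift (fun k => INR k * u k)). replace (INR 0) with 0 by reflexivity. ring. }
    assert (E2 : sumN (fun k => (INR (S N) - INR k) * u k) (S N) =
                 sumN (fun k => (INR (S N) - INR k) * u k) (S (S N))).
    { change (sumN ?g (S (S N))) with (sumN g (S N) + g (S N)). cbv beta. ring. }
    rewrite E1, E2, <- Rmult_plus_distr_l, <- sumN_plus.
    rewrite (sumN_ext _ (fun k => INR (S N) * u k)) by (intros; ring).
    rewrite sumN_scal. change (fact (S N)) with (S N * fact N)%nat. rewrite mult_INR.
    unfold u. ring.
Qed.

Definition Wf (n : nat) : R :=
  match n with 0 => 0 | S n' => INR (fact n) / 2 ^ n' end.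

Definition fpsi (n : nat) : R := INR n * (INR n - 1) - 2 * INR n * harm2 n.

Lemma harm2_S N : harm2 (S (S N)) = harm2 (S N) + / INR (S (S N)).
Proof.
  unfold harm2. replace (S (S N) - 1)%nat with (S N) by lia.
  replace (S N - 1)%nat with N by lia. rewrite seq_S, map_app, sumR_app. simpl.
  replace (S (S N)) with (2 + N)%nat by lia. ring.
Qed.

Lemma key_identity N :
  2 * sumN (fun k => fpsi (S k) + C2 (S k)) N = INR N * fpsi (S N).
Proof.
  induction N.
  - simpl. ring.
  - change (sumN ?g (S N)) with (sumN g N + g N). cbv beta.
    rewrite Rmult_plus_distr_l, IHN. unfold fpsi, C2. rewrite harm2_S.
    rewrite !S_INR. set (x := INR N). set (h := harm2 (S N)).
    assert (0 <= x) by apply pos_INR.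
    field. lra.
Qed.

Lemma sum_Sk N : sumN (fun k => INR (S k)) N = INR N * INR (S N) / 2.
Proof.
  induction N; [simpl; field|]. change (sumN ?g (S N)) with (sumN g N + g N). cbv beta.
  rewrite IHN. rewrite !S_INR. field.
Qed.

Lemma pair_sums (Da Db : list tree) ka kb N :
  (forall a, In a Da -> kappa a = ka) -> (forall b, In b Db -> kappa b = kb) ->
  (ka + kb = S N)%nat ->
  sumR (map yule_prod (flat_map (fun a => map (Node a) Db) Da)) =
    / INR N * sumR (map yule_prod Da) * sumR (map yule_prod Db) /\
  sumR (map (fun T => yule_prod T * psi T) (flat_map (fun a => map (Node a) Db) Da)) =
    / INR N * ((C2 ka + C2 kb) * sumR (map yule_prod Da) * sumR (map yule_prod Db)
      + sumR (map (fun T => yule_prod T * psi T) Da) * sumR (map yule_prod Db)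
      + sumR (map yule_prod Da) * sumR (map (fun T => yule_prod T * psi T) Db)).
Proof.
  intros Ha Hb Hk.
  set (Wb := sumR (map yule_prod Db)). set (Fb := sumR (map (fun T => yule_prod T * psi T) Db)).
  assert (HN : forall a b, In a Da -> In b Db -> INR (kappa (Node a b)) - 1 = INR N).
  { intros a b HA HB. unfold kappa; simpl. rewrite length_app.
    fold (kappa a) (kappa b). rewrite Ha, Hb, Hk by auto. rewrite S_INR; ring. }
  rewrite !sumR_flat_map. split.
  - rewrite (sumR_ext _ (fun a => (/ INR N * Wb) * yule_prod a)).
    + rewrite sumR_scal. ring.
    + intros a HA. rewrite map_map, (sumR_ext _ (fun b => (/ INR N * yule_prod a) * yule_prod b)).
      * rewrite sumR_scal. unfold Wb; ring.
      * intros b HB. simpl yule_prod. rewrite HN by auto. ring.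
  - rewrite (sumR_ext _ (fun a => (/ INR N * ((C2 ka + C2 kb) * Wb + Fb)) * yule_prod a
                                    + (/ INR N * Wb) * (yule_prod a * psi a))).
    + rewrite sumR_lin2. ring.
    + intros a HA.
      rewrite map_map, (sumR_ext _ (fun b => (/ INR N * yule_prod a * (psi a + C2 ka + C2 kb)) * yule_prod b
                                    + (/ INR N * yule_prod a) * (yule_prod b * psi b))).
      * rewrite sumR_lin2. unfold Wb, Fb. ring.
      * intros b HB. simpl yule_prod. simpl psi. rewrite HN by auto.
        rewrite Ha, Hb by auto. ring.
Qed.

Definition w (k l : nat) : R :=
  match l with 0 => 0 | S l' => INR (S k) / 2 ^ (k + l') end.

Lemma Wf_prod k l : Wf (S k) * Wf l = INR (fact k) * INR (fact l) * w k l.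
Proof.
  destruct l as [|l']; [unfold Wf, w; ring|]. unfold Wf, w.
  rewrite pow_add. rewrite !fact_simpl, !mult_INR, !S_INR.
  field. split; apply pow_nonzero; lra.
Qed.

Definition G (k l : nat) : R := C2 (S k) + C2 l + fpsi (S k) + fpsi l.

Lemma sumN_G N : sumN (fun k => INR (S k) * G k (N - k)) N = INR (S N) * (INR N * fpsi (S N)) / 2.
Proof.
  set (H := fun j => fpsi j + C2 j).
  rewrite (sumN_ext _ (fun k => INR (S k) * H (S k) + INR (S k) * H (N - k)%nat))
    by (intros; unfold G, H; ring).
  rewrite sumN_plus. rewrite (sumN_rev (fun k => INR (S k) * H (N - k)%nat)).
  rewrite (sumN_ext (fun k => INR (S (N - 1 - k)) * H (N - (N - 1 - k))%nat)
                    (fun k => INR (N - k) * H (S k))).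
  2:{ intros k Hk. f_equal; [f_equal; lia| f_equal; lia]. }
  rewrite <- sumN_plus.
  rewrite (sumN_ext _ (fun k => INR (S N) * H (S k))).
  2:{ intros k Hk. rewrite minus_INR by lia. rewrite !S_INR. ring. }
  rewrite sumN_scal. pose proof (key_identity N) as K.
  replace (sumN (fun k => H (S k)) N) with (INR N * fpsi (S N) / 2) by (unfold H; cbv beta; lra).
  field.
Qed.

Lemma D_sums f : forall s, (length s <= f)%nat ->
  sumR (map yule_prod (Dn f s)) = Wf (length s) /\
  sumR (map (fun T => yule_prod T * psi T) (Dn f s)) = Wf (length s) * fpsi (length s).
Proof.
  induction f as [|f IH]; intros s Hl.
  - destruct s; simpl in Hl; [|lia]. simpl. split; ring.
  - destruct s as [|m [|y t]].
    + simpl. split; ring.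
    + simpl. unfold fpsi, harm2. simpl. split; field.
    + rewrite Dn_cons. set (t0 := y :: t) in *.
      set (N := length t0).
      assert (HsN : length (m :: t0) = S N) by reflexivity. rewrite HsN.
      assert (HN : (N <= f)%nat) by (simpl in Hl; unfold N, t0; simpl; lia).
      assert (HN1 : (1 <= N)%nat) by (unfold N, t0; simpl; lia).
      assert (Hp : forall p, In p (splits t0) ->
        sumR (map yule_prod (flat_map (fun a => map (Node a) (Dn f (snd p))) (Dn f (m :: fst p))))
          = / INR N * (Wf (S (length (fst p))) * Wf (length (snd p))) /\
        sumR (map (fun T => yule_prod T * psi T) (flat_map (fun a => map (Node a) (Dn f (snd p))) (Dn f (m :: fst p))))
          = / INR N * (Wf (S (length (fst p))) * Wf (length (snd p))) * G (length (fst p)) (length (snd p))).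
      { intros p Hp. pose proof (Permutation_length (splits_perm _ _ Hp)) as Hlp.
        rewrite length_app in Hlp. fold N in Hlp.
        destruct (pair_sums (Dn f (m :: fst p)) (Dn f (snd p)) (S (length (fst p))) (length (snd p)) N)
          as [E1 E2].
        { intros a Ha. apply D_valid in Ha. apply Permutation_length in Ha. auto. }
        { intros b Hb. apply D_valid in Hb. apply Permutation_length in Hb. auto. }
        { lia. }
        rewrite E1, E2.
        destruct (snd p) as [|b0 B] eqn:EB.
        - replace (Dn f []) with (@nil tree) by (destruct f; reflexivity). simpl Wf. simpl. split; ring.
        - destruct (IH (m :: fst p)) as [IA1 IA2]; [simpl in *; lia|].
          destruct (IH (b0 :: B)) as [IB1 IB2]; [simpl in *; lia|].
          rewrite IA1, IA2, IB1, IB2. simpl length. unfold G. split; ring. }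
      rewrite !sumR_flat_map.
      rewrite (sumR_ext _ (fun p => INR (fact (length (fst p))) * INR (fact (length (snd p))) *
            (/ INR N * w (length (fst p)) (length (snd p)))))
        by (intros p H; rewrite (proj1 (Hp p H)), Wf_prod; ring).
      rewrite (sumR_ext (fun x => sumR (map (fun T => yule_prod T * psi T) _))
         (fun p => INR (fact (length (fst p))) * INR (fact (length (snd p))) *
            (/ INR N * w (length (fst p)) (length (snd p)) * G (length (fst p)) (length (snd p)))))
        by (intros p H; rewrite (proj2 (Hp p H)), Wf_prod; ring).
      pose proof (splits_fact t0 (fun k l => / INR N * w k l)) as S1. cbv beta in S1.
      pose proof (splits_fact t0 (fun k l => / INR N * w k l * G k l)) as S2. cbv beta in S2.
      rewrite S1, S2. fold N.
      change (sumN ?g (S N)) with (sumN g N + g N). cbv beta.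
      rewrite Nat.sub_diag. simpl w.
      assert (Ew : forall k, (k < N)%nat -> w k (N - k) = INR (S k) / 2 ^ (N - 1)).
      { intros k Hk. replace (N - k)%nat with (S (N - S k)) by lia.
        change (w k (S ?x)) with (INR (S k) / 2 ^ (k + x)).
        replace (k + (N - S k))%nat with (N - 1)%nat by lia. reflexivity. }
      rewrite (sumN_ext (fun k => / INR N * w k (N - k)) (fun k => (/ INR N / 2 ^ (N - 1)) * INR (S k)))
        by (intros k Hk; rewrite Ew by auto; unfold Rdiv; ring).
      rewrite (sumN_ext (fun k => / INR N * w k (N - k) * G k (N - k))
                        (fun k => (/ INR N / 2 ^ (N - 1)) * (INR (S k) * G k (N - k))))
        by (intros k Hk; rewrite Ew by auto; unfold Rdiv; ring).
      rewrite !sumN_scal, sum_Sk, sumN_G.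
      unfold Wf. change (fact (S N)) with (S N * fact N)%nat. rewrite mult_INR.
      assert (E : forall M, (1 <= M)%nat -> 2 ^ M = 2 * 2 ^ (M - 1))
        by (intros [|M] HM; [lia| simpl; rewrite Nat.sub_0_r; ring]).
      rewrite (E N HN1).
      assert (INR N <> 0) by (apply not_0_INR; lia).
      assert (2 ^ (N - 1) <> 0) by (apply pow_nonzero; lra).
      split; field; auto.
Qed.


Lemma valid_Phi n T : valid n T -> Phi n T = psi T.
Proof.
  intro H. apply Phi_psi.
  - eapply Permutation_NoDup; [symmetry; exact H| apply seq_NoDup].
  - intros x Hx. eapply Permutation_in; eauto.
Qed.

Theorem mainTheorem14 (n : nat) (hn : (1 <= n)%nat) :
  (exists L, BT_reps n L) /\
  (forall L, BT_reps n L ->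
     E_Y_Phi n L = INR n * (INR n - 1) - 2 * INR n * harm2 n).
Proof.
  set (C := Dn n (seq 1 n)).
  assert (HC : BT_reps n C).
  { split; [|split].
    - intros T HT. apply D_valid in HT. exact HT.
    - intros T HT. apply D_complete; auto. rewrite length_seq; auto. apply seq_NoDup.
    - apply D_fop, seq_NoDup. }
  split; [exists C; exact HC|].
  intros L HL. destruct HL as [L1 [L2 L3]]. destruct HC as [C1 [C2' C3]].
  unfold E_Y_Phi.
  rewrite (sum_invariant (valid n) (fun T => P_Y n T * Phi n T)) with (C := C); auto.
  - rewrite (sumR_ext _ (fun T => (2 ^ (n - 1) / INR (fact n)) * (yule_prod T * psi T))).
    2:{ intros T HT. rewrite valid_Phi by auto. unfold P_Y. ring. }
    rewrite sumR_scal. destruct (D_sums n (seq 1 n)) as [_ E]; [rewrite length_seq; auto|].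
    unfold C. rewrite E. rewrite length_seq. unfold fpsi.
    destruct n as [|n']; [lia|]. unfold Wf. simpl (S n' - 1)%nat. rewrite Nat.sub_0_r.
    assert (INR (fact (S n')) <> 0) by (apply INR_fact_neq_0).
    assert (2 ^ n' <> 0) by (apply pow_nonzero; lra).
    field; auto.
  - intros a b Ha Hab. unfold P_Y. rewrite (iso_yp a b Hab).
    rewrite !valid_Phi; auto.
    + rewrite (iso_psi a b Hab); auto.
    + unfold valid. eapply perm_trans; [symmetry; apply iso_perm; exact Hab| exact Ha].
Qed.
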